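(* Every $p$-stabilisation $\alpha_I$ of $\Pi$ which is of non-critical slope (i.e. $r_I<\#\mathrm{Crit}(\Pi)$) is of Shalika type.
   Context: Let $p$ be an odd prime and $n\ge 1$. Fix an isomorphism $\overline{\mathbb{Q}}_p\cong\mathbb{C}$; $v_p$ denotes the $p$-adic valuation on $\mathbb{C}_p$ normalised by $v_p(p)=1$. Let $\Pi$ be a cuspidal automorphic representation of $\mathrm{GL}_{2n}(\mathbb{A}_{\mathbb{Q}})$ which is cohomological with respect to an integral weight $\mu=(\mu_1,\dots,\mu_{2n})\in\mathbb{Z}^{2n}$, which is the transfer of a globally generic cuspidal automorphic representation of $\mathrm{GSpin}_{2n+1}(\mathbb{A}_{\mathbb{Q}})$, and which is unramified at $p$. Then $\mu$ is dominant ($\mu_1\ge\cdots\ge\mu_{2n}$) and pure: there is an integer $w$ (the purity weight) with $\mu_i+\mu_{2n+1-i}=w$ for all $i$. The Hodge–Tate weights are $h_i=\mu_i+2n-i$ ($1\le i\le 2n$). Set $\mathrm{Crit}(\Pi)=\{j\in\mathbb{Z}:\mu_n\ge j\ge\mu_{n+1}\}$, so $\#\mathrm{Crit}(\Pi)=h_n-h_{n+1}$. Write $\Pi_p\cong\mathrm{Ind}_{B(\mathbb{Q}_p)}^{\mathrm{GL}_{2n}(\mathbb{Q}_p)}(|\cdot|^{(2n-1)/2}\lambda_p)$ (normalised parabolic induction from the upper triangular Borel $B$) for an unramified character $\lambda_p$ of the diagonal torus; the Satake parameters are $\alpha_i=\lambda_{p,i}(p)$, where $\lambda_{p,i}$ is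 the $i$-th diagonal component. They are indexed so that $v_p(\alpha_1)\ge\cdots\ge v_p(\alpha_{2n})$ and $\alpha_i\alpha_{2n+1-i}=\lambda$ for all $i$, for a fixed $\lambda$ with $v_p(\lambda)=2n-1+w$ (possible by the transfer from $\mathrm{GSpin}_{2n+1}$). Known fact (Hida), used freely: the Newton polygon (the piecewise linear curve through $(0,0)$ and $(j,\sum_{i=1}^{j}v_p(\alpha_{2n+1-i}))$, $j=1,\dots,2n$) lies on or above the Hodge polygon (through $(0,0)$ and $(j,\sum_{i=1}^{j}h_{2n+1-i})$, $j=1,\dots,2n$), and their endpoints coincide. For $I=(i_1,\dots,i_n)$ with $1\le i_1<\dots<i_n\le 2n$ put $\alpha_I=\alpha_{i_1}\cdots\alpha_{i_n}$ (a ''$p$-stabilisation'') and $r_I=v_p(\alpha_I)-\sum_{i=n+1}^{2n}h_i$. $\alpha_I$ is of Shalika type if $I$ contains exactly one element of each pair $\{i,2n+1-i\}$, $i=1,\dots,n$; it is of non-critical slope if $r_I<\#\mathrm{Crit}(\Pi)$. *)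

(* Defs.v *)
(* Abstracted model: only the p-adic valuations of the
   Satake parameters and the weight mu enter the statement. *)
From HB Require Import structures.
From mathcomp Require Import all_boot all_order all_algebra.
Set Implicit Arguments. Unset Strict Implicit. Unset Printing Implicit Defensive.
Import Order.TTheory GRing.Theory Num.Theory.
Local Open Scope ring_scope.

(* Hodge--Tate weight h_i = mu_i + 2n - i  (1-based index i, 1 <= i <= 2n). *)
Definition hw (n : nat) (mu : nat -> int) (i : nat) : int :=
  mu i + ((2 * n)%N - i)%N%:Z.

Definition numCrit (n : nat) (mu : nat -> int) : int := hw n mu n - hw n mu n.+1.

Definition is_index_tuple (n : nat) (I : seq nat) : bool :=
  [&& size I == n, sorted ltn I & all (fun i => (1 <= i <= 2 * n)%N) I].

(* v_p(alpha_I) = sum_{i in I} v_p(alpha_i); vp i stands for v_p(alpha_i). *)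
Definition val_alphaI (vp : nat -> rat) (I : seq nat) : rat := \sum_(i <- I) vp i.

Definition rI (n : nat) (mu : nat -> int) (vp : nat -> rat) (I : seq nat) : rat :=
  val_alphaI vp I - (\sum_(n.+1 <= i < (2 * n).+1) hw n mu i)%:~R.

Definition non_critical_slope (n : nat) (mu : nat -> int) (vp : nat -> rat)
  (I : seq nat) : bool := rI n mu vp I < (numCrit n mu)%:~R.

Definition shalika_type (n : nat) (I : seq nat) : Prop :=
  forall i : nat, (1 <= i <= n)%N -> (i \in I) != (((2 * n).+1 - i)%N \in I).

(* Newton polygon (through (j, sum_{i=1}^j v_p(alpha_{2n+1-i}))) lies on or above
   the Hodge polygon (through (j, sum_{i=1}^j h_{2n+1-i})), endpoints coincide.
   Both are piecewise linear with vertices at integer abscissae, so this is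
   exactly the comparison at j = 0..2n. *)
Definition newton_above_hodge (n : nat) (mu : nat -> int) (vp : nat -> rat) : Prop :=
  (forall j : nat, (1 <= j <= 2 * n)%N ->
     (\sum_(1 <= i < j.+1) hw n mu ((2 * n).+1 - i)%N)%:~R
       <= \sum_(1 <= i < j.+1) vp ((2 * n).+1 - i)%N)
  /\ (\sum_(1 <= i < (2 * n).+1) hw n mu ((2 * n).+1 - i)%N)%:~R
       = \sum_(1 <= i < (2 * n).+1) vp ((2 * n).+1 - i)%N.

(* Main.v *)
Require Import Defs.
From HB Require Import structures.
From mathcomp Require Import all_boot all_order all_algebra.
From mathcomp Require Import zify ring lra.
Import Order.TTheory GRing.Theory Num.Theory.
Local Open Scope ring_scope.
From Stdlib Require Import Classical.

Lemma rev_sum (R : zmodType) (f : nat -> R) (M j : nat) : (j <= M)%N ->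
  \sum_(1 <= i < j.+1) f (M.+1 - i)%N = \sum_(M.+1 - j <= i < M.+1) f i.
Proof.
elim: j => [|j IH] hj.
  by rewrite !big_geq // subn0.
rewrite big_nat_recr //= IH; last by lia.
rewrite (@big_ltn _ _ _ (M.+1 - j.+1)); last by lia.
have -> : (M.+1 - j.+1).+1 = (M.+1 - j)%N by lia.
by rewrite addrC.
Qed.

Lemma minsum (vp : nat -> rat) (m : nat)
  (hord : forall i : nat, (1 <= i < m)%N -> vp i.+1 <= vp i) (s : seq nat) :
  uniq s -> all (fun i => (1 <= i <= m)%N) s ->
  \sum_(1 <= i < (size s).+1) vp (m.+1 - i)%N <= \sum_(i <- s) vp i.
Proof.
elim: m hord s => [|m IH] hord s us alls.
  case: s us alls => [|x s] _ /=.
    by rewrite big_geq // big_nil.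
  by case/andP => /andP [h1 h2]; move: h1 h2; lia.
have hord' : forall i : nat, (1 <= i < m)%N -> vp i.+1 <= vp i.
  by move=> i hi; apply: hord; lia.
have hsz : (size s <= m.+1)%N.
  have -> : m.+1 = size (iota 1 m.+1) by rewrite size_iota.
  apply: uniq_leq_size => // x hx; rewrite mem_iota.
  by move/allP: alls => /(_ x hx); lia.
case hin: (m.+1 \in s).
  rewrite [X in _ <= X](big_rem m.+1) //=.
  have hs : size s = (size (rem m.+1 s)).+1 by rewrite size_rem // prednK //; case: s hin {alls us hsz}.
  rewrite hs big_ltn //.
  have -> : (m.+2 - 1)%N = m.+1 by lia.
  apply: lerD => //.
  rewrite big_add1 /=.
  have := IH hord' (rem m.+1 s) (rem_uniq _ us).
  have ha : all (fun i => (1 <= i <= m)%N) (rem m.+1 s).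
    apply/allP => x; rewrite (mem_rem_uniq _ us) => /andP[hx1 hx2].
    move/allP: alls => /(_ x hx2); move: hx1; lia.
  move=> /(_ ha); apply: le_trans; apply: ler_sum => i _.
  by have -> : (m.+2 - i.+1)%N = (m.+1 - i)%N by lia.
have ha : all (fun i => (1 <= i <= m)%N) s.
  apply/allP => x hx; move/allP: alls => /(_ x hx).
  have : x != m.+1 by apply/eqP => E; rewrite -E hx in hin.
  lia.
have hsz' : (size s <= m)%N.
  have -> : m = size (iota 1 m) by rewrite size_iota.
  apply: uniq_leq_size => // x hx; rewrite mem_iota.
  by move/allP: ha => /(_ x hx); lia.
apply: le_trans (IH hord' s us ha).
apply: ler_sum_nat => i hi.
have -> : (m.+2 - i)%N = (m.+1 - i).+1 by lia.
apply: hord; lia.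
Qed.

Lemma doubled (n : nat) (I : seq nat) (hI : is_index_tuple n I) (l : nat) :
  (1 <= l <= n)%N -> l \notin I -> ((2 * n).+1 - l)%N \notin I ->
  exists k, [/\ (1 <= k <= n)%N, k \in I & ((2 * n).+1 - k)%N \in I].
Proof.
move=> hl hl1 hl2.
case/and3P: hI => /eqP hsz hsort hall.
have uI : uniq I by apply: (sorted_uniq ltn_trans ltnn).
apply/not_all_not_ex => hno.
pose f i := minn i ((2 * n).+1 - i)%N.
have finj : {in I &, injective f}.
  move=> a b ha hb.
  move/allP: hall => hall.
  have := hall a ha; have := hall b hb => hb' ha' hf.
  case: (ltnP n a) => ha2; case: (ltnP n b) => hb2.
  - rewrite /f in hf; apply/eqP; move: hf; lia.
  - have hfa : f a = ((2 * n).+1 - a)%N by rewrite /f; lia.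
    have hfb : f b = b by rewrite /f; lia.
    exfalso; apply: (hno b); split => //; first lia.
    by have -> : ((2 * n).+1 - b)%N = a by move: hf; rewrite hfa hfb; lia.
  - have hfa : f a = a by rewrite /f; lia.
    have hfb : f b = ((2 * n).+1 - b)%N by rewrite /f; lia.
    exfalso; apply: (hno a); split => //; first lia.
    by have -> : ((2 * n).+1 - a)%N = b by move: hf; rewrite hfa hfb; lia.
  - rewrite /f in hf; apply/eqP; move: hf; lia.
have um : uniq (map f I) by rewrite map_inj_in_uniq.
have sub : {subset map f I <= iota 1 n}.
  move=> x /mapP[a ha ->]; rewrite mem_iota.
  move/allP: hall => /(_ a ha); rewrite /f; lia.
have hsz2 : (size (iota 1 n) <= size (map f I))%N by rewrite size_iota size_map hsz.
have [_ eqs] := uniq_min_size um sub hsz2.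
have : l \in map f I by rewrite eqs mem_iota; lia.
case/mapP => a ha hfa.
move/allP: hall => /(_ a ha) ha'.
case: (ltnP n a) => ha2.
- have : a = ((2 * n).+1 - l)%N by move: hfa; rewrite /f; lia.
  by move=> E; rewrite -E ha in hl2.
- have : a = l by move: hfa; rewrite /f; lia.
  by move=> E; rewrite -E ha in hl1.
Qed.

Lemma hc_lem (n : nat) (mu : nat -> int) (w : int) (hn2 : (2 <= n)%N)
  (hpure : forall i : nat, (1 <= i <= 2 * n)%N -> mu i + mu ((2 * n).+1 - i)%N = w) :
  hw n mu n + hw n mu n.+1 = ((2 * n).-1)%:Z + w.
Proof.
rewrite /hw.
have h := hpure n.
have e : ((2 * n).+1 - n)%N = n.+1 by move: hn2; clear; lia.
rewrite e in h.
have h' : (1 <= n <= 2 * n)%N by move: hn2; clear; lia.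
rewrite -(h h').
have -> : ((2 * n).-1)%:Z = (2 * n - n)%N%:Z + (2 * n - n.+1)%N%:Z.
  rewrite -PoszD; congr Posz; move: hn2; clear; lia.
ring.
Qed.

Lemma hd_lem (n : nat) (mu : nat -> int) (hn2 : (2 <= n)%N)
  (hdom : forall i : nat, (1 <= i < 2 * n)%N -> mu i.+1 <= mu i) :
  hw n mu n.+2 <= hw n mu n.+1.
Proof.
rewrite /hw.
have h' : (1 <= n.+1 < 2 * n)%N by move: hn2; clear; lia.
have := hdom n.+1 h'.
have -> : ((2 * n - n.+1)%N = (2 * n - n.+2).+1)%N by move: hn2; clear; lia.
lia.
Qed.

Lemma fin_lem (a b d H2 : int) (x A B : rat) : (a + b)%:~R = x -> d <= b ->
  H2%:~R <= B -> B <= A -> (a - b)%:~R <= x + A - (b + d + H2)%:~R.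
Proof.
move=> hx hd hB hA.
have hd' : d%:~R <= b%:~R :> rat by rewrite ler_int.
rewrite !(intrD, intrN) in hx *.
lra.
Qed.

Theorem mainTheorem2
  (n : nat) (mu : nat -> int) (w : int) (vp : nat -> rat)
  (hn : (1 <= n)%N)
  (hdom : forall i : nat, (1 <= i < 2 * n)%N -> mu i.+1 <= mu i)
  (hpure : forall i : nat, (1 <= i <= 2 * n)%N -> mu i + mu ((2 * n).+1 - i)%N = w)
  (hord : forall i : nat, (1 <= i < 2 * n)%N -> vp i.+1 <= vp i)
  (hpair : forall i : nat, (1 <= i <= 2 * n)%N ->
             vp i + vp ((2 * n).+1 - i)%N = ((2 * n).-1)%:R + w%:~R)
  (hNH : newton_above_hodge n mu vp)
  (I : seq nat) (hI : is_index_tuple n I) :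
  non_critical_slope n mu vp I -> shalika_type n I.
Proof.
move=> hnc i hi; apply/negP => /eqP heq.
have [k [hk hkI hsI]] : exists k, [/\ (1 <= k <= n)%N, k \in I & ((2 * n).+1 - k)%N \in I].
  case hiI: (i \in I); first by exists i; split => //; rewrite -heq.
  have h1 : i \notin I by rewrite hiI.
  have h2 : ((2 * n).+1 - i)%N \notin I by rewrite -heq hiI.
  exact: (@doubled n I hI i hi h1 h2).
move: hnc; apply/negP; rewrite -leNgt.
have hI' := hI; case/and3P: hI' => /eqP hsz hsort hall.
have uI : uniq I by apply: (sorted_uniq ltn_trans ltnn).
set s := ((2 * n).+1 - k)%N.
have hsk : s != k by rewrite /s; apply/eqP; lia.
have hs1 : s \in rem k I by rewrite (mem_rem_uniq _ uI) inE hsk hsI.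
have uJ : uniq (rem s (rem k I)) by do 2 apply: rem_uniq.
have hszJ : size (rem s (rem k I)) = (n - 2)%N.
  rewrite size_rem // size_rem // hsz; lia.
have hn2 : (2 <= n)%N.
  have : (0 < size (rem k I))%N by case: (rem k I) hs1.
  by rewrite size_rem // hsz; lia.
have allJ : all (fun i => (1 <= i <= 2 * n)%N) (rem s (rem k I)).
  apply/allP => x; rewrite (mem_rem_uniq _ (rem_uniq _ uI)) inE (mem_rem_uniq _ uI) inE.
  by case/andP => _ /andP[_ hx]; move/allP: hall => /(_ x hx).
have hmin := @minsum vp (2 * n) hord _ uJ allJ.
rewrite hszJ in hmin.
have hsumI : val_alphaI vp I = ((2 * n).-1)%:R + w%:~R + \sum_(i <- rem s (rem k I)) vp i.
  rewrite /val_alphaI (big_rem k) //= (big_rem s) //= -(hpair k); last by lia.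
  by rewrite addrA.
set HN2 := \sum_(1 <= i < (n - 2)%N.+1) hw n mu ((2 * n).+1 - i)%N.
have hH2 : HN2%:~R <= \sum_(1 <= i < (n - 2)%N.+1) vp ((2 * n).+1 - i)%N.
  case: (posnP (n - 2)%N) => h0.
    by rewrite /HN2 h0 !big_geq.
  have hj : (1 <= n - 2 <= 2 * n)%N by move: h0 hn2; clear; lia.
  exact: (proj1 hNH (n - 2)%N hj).
have hHsum : (\sum_(n.+1 <= i < (2 * n).+1) hw n mu i) = hw n mu n.+1 + hw n mu n.+2 + HN2.
  rewrite /HN2 rev_sum; last by move: hn2; clear; lia.
  rewrite [LHS]big_ltn; last by move: hn2; clear; lia.
  rewrite [X in _ + X]big_ltn; last by move: hn2; clear; lia.
  have -> : ((2 * n).+1 - (n - 2))%N = n.+3 by move: hn2; clear; lia.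
  by rewrite addrA.
have hc := @hc_lem n mu w hn2 hpure.
have hd := @hd_lem n mu hn2 hdom.
rewrite /non_critical_slope /rI hsumI hHsum /numCrit.
apply: (@fin_lem _ _ _ _ _ _ _ _ hd hH2 hmin).
by rewrite hc intrD.
Qed.
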